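(* Let $A\in\mathbb{R}^{n\times n}$, $B\in\mathbb{R}^{n\times m}$, $Q\succeq0$, $R\succ0$, with $(A,B)$ stabilizable and $Q=C^TC$ with $(A,C)$ detectable, and let $\Lambda=\mathrm{diag}(Q,R)$. Let $S,H$ be off-policy data matrices with $S\succ0$ (see context). Define $P_0=0$ and, for $k\ge0$, let $P_{k+1}\in\mathbb{S}^{n+m}$ solve $$SP_{k+1}S=S\Lambda S+H\big(P_{k,11}-P_{k,12}P_{k,22}^{-1}P_{k,12}^T\big)H^T,$$ where the Schur-complement term is taken to be $0$ when $k=0$ (so $P_1=\Lambda$). Then $P_k\to P^*$ as $k\to\infty$, where $$P^*=\begin{bmatrix}Q+A^TX^*A & A^TX^*B\\ B^TX^*A & R+B^TX^*B\end{bmatrix}$$ and $X^*$ is the unique positive semidefinite solution of $X=A^TXA-A^TXB(R+B^TXB)^{-1}B^TXA+Q$.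
   Context: Off-policy data: along one trajectory of $x(k+1)=Ax(k)+Bu(k)$ from $x(0)=z$ with arbitrary inputs $u(0),\dots,u(N-1)$, $S=\frac1N\sum_{k=0}^{N-1}[x(k);u(k)][x(k);u(k)]^T$ and $H=\frac1N\sum_{k=0}^{N-1}[x(k);u(k)]x(k+1)^T$. For $P\in\mathbb{S}^{n+m}$, $P_{11}\in\mathbb{R}^{n\times n}$, $P_{12}\in\mathbb{R}^{n\times m}$, $P_{22}\in\mathbb{R}^{m\times m}$ denote the blocks of $P=\begin{bmatrix}P_{11}&P_{12}\\P_{12}^T&P_{22}\end{bmatrix}$. *)

(* Defs.v *)
From HB Require Import structures.
From mathcomp Require Import all_boot all_order all_algebra.
From mathcomp Require Import all_classical all_reals all_analysis.
Set Implicit Arguments. Unset Strict Implicit. Unset Printing Implicit Defensive.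
Import Order.TTheory GRing.Theory Num.Theory.
Local Open Scope ring_scope.

Section Defs.
Variable R : realType.

Definition psd (n : nat) (M : 'M[R]_n) : Prop :=
  M^T = M /\ forall v : 'cV[R]_n, 0 <= (v^T *m M *m v) 0 0.

Definition pd (n : nat) (M : 'M[R]_n) : Prop :=
  M^T = M /\ forall v : 'cV[R]_n, v != 0 -> 0 < (v^T *m M *m v) 0 0.

(* Schur stability: every (complex) eigenvalue a + i b of M, with eigenvector
   x + i y <> 0, satisfies |a + i b| < 1.  Complex eigen-equation written
   out over the reals: M (x + i y) = (a + i b)(x + i y). *)
Definition schur_stable (n : nat) (M : 'M[R]_n) : Prop :=
  forall (a b : R) (x y : 'cV[R]_n), (x != 0 \/ y != 0) ->
    M *m x = a *: x - b *: y -> M *m y = b *: x + a *: y ->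
    a ^+ 2 + b ^+ 2 < 1.

Definition stabilizable (n m : nat) (A : 'M[R]_n) (B : 'M[R]_(n, m)) : Prop :=
  exists K : 'M[R]_(m, n), schur_stable (A + B *m K).

Definition detectable (n p : nat) (A : 'M[R]_n) (C : 'M[R]_(p, n)) : Prop :=
  exists L : 'M[R]_(n, p), schur_stable (A + L *m C).

Definition zdat (n m : nat) (x : nat -> 'cV[R]_n) (u : nat -> 'cV[R]_m) (k : nat)
  : 'cV[R]_(n + m) := col_mx (x k) (u k).

Definition Sdata (n m N : nat) (x : nat -> 'cV[R]_n) (u : nat -> 'cV[R]_m)
  : 'M[R]_(n + m) :=
  N%:R^-1 *: \sum_(k < N) (zdat x u k *m (zdat x u k)^T).

Definition Hdata (n m N : nat) (x : nat -> 'cV[R]_n) (u : nat -> 'cV[R]_m)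
  : 'M[R]_(n + m, n) :=
  N%:R^-1 *: \sum_(k < N) (zdat x u k *m (x k.+1)^T).

Definition Lambda (n m : nat) (Q : 'M[R]_n) (Rw : 'M[R]_m) : 'M[R]_(n + m) :=
  block_mx Q 0 0 Rw.

Definition schurP (n m : nat) (P : 'M[R]_(n + m)) : 'M[R]_n :=
  ulsubmx P - ursubmx P *m invmx (drsubmx P) *m (ursubmx P)^T.

Definition schur_term (n m : nat) (P : nat -> 'M[R]_(n + m)) (k : nat) : 'M[R]_n :=
  if k == 0%N then 0 else schurP (P k).

Definition dare (n m : nat) (A : 'M[R]_n) (B : 'M[R]_(n, m)) (Q : 'M[R]_n)
  (Rw : 'M[R]_m) (X : 'M[R]_n) : Prop :=
  X = A^T *m X *m A - A^T *m X *m B *m invmx (Rw + B^T *m X *m B) *m B^T *m X *m A + Q.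

Definition Pstar (n m : nat) (A : 'M[R]_n) (B : 'M[R]_(n, m)) (Q : 'M[R]_n)
  (Rw : 'M[R]_m) (X : 'M[R]_n) : 'M[R]_(n + m) :=
  block_mx (Q + A^T *m X *m A) (A^T *m X *m B)
           (B^T *m X *m A) (Rw + B^T *m X *m B).

End Defs.

(* Main.v *)
Require Import Defs.
From HB Require Import structures.
From mathcomp Require Import all_boot all_order all_algebra.
From mathcomp Require Import all_classical all_reals all_analysis.
From mathcomp Require Import complex.
From mathcomp Require Import ring lra.
Import Order.TTheory GRing.Theory Num.Theory.
Import numFieldNormedType.Exports.
Local Open Scope classical_set_scope.
Local Open Scope ring_scope.

Set Implicit Arguments. Unset Strict Implicit. Unset Printing Implicit Defensive.

Section Stab.
Variable R : realType.

Lemma cvg0P (f : nat -> R) : f @ \oo --> 0 <->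
  forall e, 0 < e -> exists N, forall k, (N <= k)%N -> `|f k| < e.
Proof.
rewrite cvgrPdist_lt; split => H e /H.
- move=> [N _ HN]; exists N => k Hk; move: (HN k Hk). by rewrite sub0r normrN.
- move=> [N HN]; exists N => // k Hk /=. by rewrite sub0r normrN; apply: HN.
Qed.

Lemma rec_null (a b : nat -> R) (c : R) : (forall k, 0 <= a k) -> 0 <= c -> c < 1 ->
  b @ \oo --> 0 -> (forall k, a k.+1 <= c * a k + b k) -> a @ \oo --> 0.
Proof.
move=> a0 c0 c1 /cvg0P hb hrec; apply/cvg0P => e e0.
have e2 : 0 < e / 2 by rewrite divr_gt0.
have ec : 0 < e / 2 * (1 - c) by rewrite mulr_gt0 // subr_gt0.
have [N HN] := hb _ ec.
set K := `|a N - e / 2|.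
have hd : forall t, a (N + t)%N - e / 2 <= c ^+ t * K.
  elim=> [|t IH]; first by rewrite addn0 expr0 mul1r /K ler_norm.
  rewrite addnS exprS -mulrA.
  have h1 := hrec (N + t)%N.
  have h2 : b (N + t)%N < e / 2 * (1 - c).
    by apply: le_lt_trans (ler_norm _) (HN _ (leq_addr _ _)).
  have h3 : c * (a (N + t)%N - e / 2) <= c * (c ^+ t * K) by rewrite ler_wpM2l.
  move: h1 h2 h3; set x := a _.+1; set y := a _; set z := b _; move=> h1 h2 h3.
  rewrite mulrBr mulr1 in h2; rewrite mulrBr in h3.
  lra.
have hK : (fun t => c ^+ t * K) @ \oo --> 0.
  rewrite -(mul0r K); apply: cvgMr_tmp; apply: cvg_expr; rewrite ger0_norm //.
have [T HT] := (proj1 (cvg0P _) hK) _ e2.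
exists (N + T)%N => k Hk.
have -> : k = (N + (k - N))%N by rewrite subnKC // (leq_trans (leq_addr T N)) // addnC.
have := hd (k - N)%N; have := HT (k - N)%N; rewrite leq_subRL ?Hk //; last first.
  by rewrite (leq_trans (leq_addr T N)) // addnC.
move=> /(_ isT) h1 h2; have := a0 (N + (k - N))%N.
move: h1 h2; set y := c ^+ _ * K; set x := a _ => h1 h2 h3.
rewrite ger0_norm //; move: h1; rewrite ger0_norm ?mulr_ge0 ?exprn_ge0 ?normr_ge0 //. lra.
Qed.

Local Notation C := (R[i]).

Lemma normc_ge0 (z : C) : 0 <= Normc.normc z.
Proof. by case: z => a b; rewrite /Normc.normc sqrtr_ge0. Qed.

Lemma crec_null (s t : nat -> C) (z : C) : Normc.normc z < 1 ->
  (fun k => Normc.normc (t k)) @ \oo --> 0 ->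
  (forall k, s k.+1 = z * s k + t k) ->
  (fun k => Normc.normc (s k)) @ \oo --> 0.
Proof.
move=> z1 ht hs; apply: (rec_null _ (normc_ge0 z) z1 ht) => [k|k]; first exact: normc_ge0.
rewrite hs -Normc.normcM; exact: le_normcD.
Qed.


Lemma prod_null n' (MC : 'M[C]_n'.+1) (s : seq C) :
  all (fun z => Normc.normc z < 1) s ->
  forall E : 'M[C]_n'.+1, E * \prod_(z <- s) (MC - z%:M) = 0 ->
  forall i j, (fun k => Normc.normc ((E * MC ^+ k) i j)) @ \oo --> 0.
Proof.
elim: s => [|z s IH] /=.
  move=> _ E; rewrite big_nil mulr1 => -> i j.
  under eq_fun do rewrite mul0r mxE Normc.normc0. exact: cvg_cst.
move=> /andP[hz hs] E; rewrite big_cons mulrA => /(IH hs) hE i j.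
apply: (crec_null hz (hE i j)) => k.
rewrite exprS mulrA mulrBr mulrBl !mxE.
rewrite -mulmxE mul_mx_scalar mulmxE.
under [in X in _ = _ + (_ - X)]eq_bigr do rewrite mxE -mulrA.
rewrite -mulr_sumr; ring.
Qed.


Lemma normcR (r : R) : Normc.normc (r%:C)%C = `|r|.
Proof. by rewrite /Normc.normc /= expr0n /= addr0 sqrtr_sqr. Qed.

Lemma ReD (x y : C) : complex.Re (x + y) = complex.Re x + complex.Re y.
Proof. by case: x => a b; case: y => c d. Qed.
Lemma ImD (x y : C) : complex.Im (x + y) = complex.Im x + complex.Im y.
Proof. by case: x; case: y. Qed.
Lemma ReS n (F : 'I_n -> C) : complex.Re (\sum_j F j) = \sum_j complex.Re (F j).
Proof. by apply: (big_morph (@complex.Re R)) => //; apply: ReD. Qed.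
Lemma ImS n (F : 'I_n -> C) : complex.Im (\sum_j F j) = \sum_j complex.Im (F j).
Proof. by apply: (big_morph (@complex.Im R)) => //; apply: ImD. Qed.

Lemma eigen_stable n (M : 'M[R]_n) (z : C) (v : 'rV[C]_n) : schur_stable M ->
  v *m map_mx (real_complex R) M^T = z *: v -> v != 0 -> Normc.normc z < 1.
Proof.
move=> hM hv vn0.
pose x := \col_i complex.Re (v 0 i). pose y := \col_i complex.Im (v 0 i).
have hvi : forall i, \sum_j v 0 j * ((M i j)%:C)%C = z * v 0 i.
  move=> i; have := congr1 (fun X : 'rV[C]_n => X 0 i) hv; rewrite !mxE => <-.
  by apply: eq_bigr => j _; rewrite !mxE.
have h1 : M *m x = complex.Re z *: x - complex.Im z *: y.
  apply/matrixP => i k; rewrite ord1 !mxE.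
  have := congr1 (@complex.Re R) (hvi i); rewrite ReS => h.
  transitivity (\sum_j complex.Re (v 0 j * ((M i j)%:C)%C)).
    by apply: eq_bigr => j _; rewrite mxE; case: (v 0 j) => p q /=; ring.
  by rewrite h; case: z {hv hvi h} => p q; case: (v 0 i) => r s /=; ring.
have h2 : M *m y = complex.Im z *: x + complex.Re z *: y.
  apply/matrixP => i k; rewrite ord1 !mxE.
  have := congr1 (@complex.Im R) (hvi i); rewrite ImS => h.
  transitivity (\sum_j complex.Im (v 0 j * ((M i j)%:C)%C)).
    by apply: eq_bigr => j _; rewrite mxE; case: (v 0 j) => p q /=; ring.
  by rewrite h; case: z {hv hvi h h1} => p q; case: (v 0 i) => r s /=; ring.
have hxy : x != 0 \/ y != 0.
  case: (eqVneq x 0) => hx; last by left.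
  case: (eqVneq y 0) => hy; last by right.
  exfalso; move/eqP: vn0; apply; apply/matrixP => i j; rewrite ord1 mxE.
  have := congr1 (fun X : 'cV[R]_n => X j 0) hx; have := congr1 (fun X : 'cV[R]_n => X j 0) hy.
  rewrite !mxE; case: (v 0 j) => p q /= -> -> //.
have := hM _ _ _ _ hxy h1 h2.
case: z {hv hvi h1 h2} => a b /= hab.
rewrite /Normc.normc -sqrtr1 ltr_sqrt //; lra.
Qed.


Lemma map_pow n' (M : 'M[R]_n'.+1) k :
  (map_mx (real_complex R) M) ^+ k = map_mx (real_complex R) (M ^+ k).
Proof.
elim: k => [|k IH]; first by rewrite !expr0 map_mx1.
by rewrite !exprS IH -!mulmxE map_mxM.
Qed.

Lemma tr_pow n (M : 'M[R]_n) k : (M ^+ k)^T = (M^T) ^+ k.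
Proof.
elim: k => [|k IH]; first by rewrite !expr0 trmx1.
by rewrite exprS exprSr -!mulmxE trmx_mul IH.
Qed.

Lemma stable_pow0 n (M : 'M[R]_n) : schur_stable M ->
  forall i j, (fun k => (M ^+ k) i j) @ \oo --> 0.
Proof.
case: n M => [|n'] M hM i j; first by case: i.
set MC := map_mx (real_complex R) M^T.
have [rs Hrs] := closed_field_poly_normal (char_poly MC).
rewrite (monicP (char_poly_monic MC)) scale1r in Hrs.
have hroots : all (fun z => Normc.normc z < 1) rs.
  apply/allP => z zin.
  have : root (char_poly MC) z by rewrite Hrs root_prod_XsubC zin.
  rewrite -eigenvalue_root_char => /eigenvalueP [v hv vn0].
  exact: (eigen_stable hM hv vn0).
have H0 : 1 * \prod_(z <- rs) (MC - z%:M) = 0.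
  rewrite mul1r -(Cayley_Hamilton MC) Hrs rmorph_prod; apply: eq_bigr => z _.
  by rewrite rmorphB /= horner_mx_X horner_mx_C.
have := prod_null hroots H0 j i.
under eq_fun do rewrite mul1r /MC map_pow -tr_pow !mxE normcR.
move=> /cvg0P h; apply/cvg0P => e /h [N HN]; exists N => k /HN.
by rewrite normr_id.
Qed.

End Stab.

Section QF.
Variable R : realType.

Definition dot n (u v : 'cV[R]_n) : R := (u^T *m v) 0 0.
Definition qf n (M : 'M[R]_n) (v : 'cV[R]_n) : R := (v^T *m M *m v) 0 0.

Lemma qfE n (M : 'M[R]_n) v : qf M v = dot v (M *m v).
Proof. by rewrite /qf /dot mulmxA. Qed.

Lemma dotC n (u v : 'cV[R]_n) : dot u v = dot v u.
Proof. rewrite /dot; have -> : v^T *m u = (u^T *m v)^T by rewrite trmx_mul trmxK.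
by rewrite [_^T 0 0]mxE. Qed.

Lemma dotDl n (u1 u2 v : 'cV[R]_n) : dot (u1 + u2) v = dot u1 v + dot u2 v.
Proof. by rewrite /dot linearD /= mulmxDl mxE. Qed.
Lemma dotDr n (u v1 v2 : 'cV[R]_n) : dot u (v1 + v2) = dot u v1 + dot u v2.
Proof. by rewrite /dot mulmxDr mxE. Qed.
Lemma dotNl n (u v : 'cV[R]_n) : dot (- u) v = - dot u v.
Proof. by rewrite /dot linearN /= mulNmx mxE. Qed.
Lemma dotNr n (u v : 'cV[R]_n) : dot u (- v) = - dot u v.
Proof. by rewrite /dot mulmxN mxE. Qed.
Lemma dotBl n (u1 u2 v : 'cV[R]_n) : dot (u1 - u2) v = dot u1 v - dot u2 v.
Proof. by rewrite dotDl dotNl. Qed.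
Lemma dotBr n (u v1 v2 : 'cV[R]_n) : dot u (v1 - v2) = dot u v1 - dot u v2.
Proof. by rewrite dotDr dotNr. Qed.
Lemma dot0r n (u : 'cV[R]_n) : dot u 0 = 0.
Proof. by rewrite /dot mulmx0 mxE. Qed.
Lemma dot0l n (u : 'cV[R]_n) : dot 0 u = 0.
Proof. by rewrite dotC dot0r. Qed.
Lemma dot_mull n k (M : 'M[R]_(n, k)) (u : 'cV[R]_k) (v : 'cV[R]_n) :
  dot (M *m u) v = dot u (M^T *m v).
Proof. by rewrite /dot trmx_mul mulmxA. Qed.
Lemma dot_mulr n k (M : 'M[R]_(k, n)) (u : 'cV[R]_k) (v : 'cV[R]_n) :
  dot u (M *m v) = dot (M^T *m u) v.
Proof. by rewrite dot_mull trmxK. Qed.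

Lemma qfD n (M1 M2 : 'M[R]_n) v : qf (M1 + M2) v = qf M1 v + qf M2 v.
Proof. by rewrite !qfE mulmxDl dotDr. Qed.
Lemma qfB n (M1 M2 : 'M[R]_n) v : qf (M1 - M2) v = qf M1 v - qf M2 v.
Proof. by rewrite !qfE mulmxBl dotBr. Qed.
Lemma qf0 n (v : 'cV[R]_n) : qf 0 v = 0.
Proof. by rewrite qfE mul0mx dot0r. Qed.
Lemma qf_conj n k (U : 'M[R]_(k, n)) (M : 'M[R]_k) v :
  qf (U^T *m M *m U) v = qf M (U *m v).
Proof. by rewrite !qfE -!mulmxA dot_mulr trmxK. Qed.
Lemma qf_v0 n (M : 'M[R]_n) : qf M 0 = 0.
Proof. by rewrite qfE dot0l. Qed.

Lemma dot_self n (v : 'cV[R]_n) : dot v v = \sum_i v i 0 ^+ 2.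
Proof. by rewrite /dot mxE; apply: eq_bigr => i _; rewrite mxE expr2. Qed.
Lemma dot_self_ge0 n (v : 'cV[R]_n) : 0 <= dot v v.
Proof. by rewrite dot_self sumr_ge0 // => i _; rewrite sqr_ge0. Qed.
Lemma dot_self_eq0 n (v : 'cV[R]_n) : dot v v = 0 -> v = 0.
Proof.
rewrite dot_self => /eqP; rewrite psumr_eq0 => [/allP h|i _]; last exact: sqr_ge0.
apply/matrixP => i j; rewrite ord1 mxE.
by have := h i (mem_index_enum _); rewrite sqrf_eq0 => /eqP.
Qed.

Definition psdle n (X Y : 'M[R]_n) := forall v, qf X v <= qf Y v.

Lemma pd_unit n (D : 'M[R]_n) : pd D -> D \in unitmx.
Proof.
move=> [hs hp]; rewrite -row_free_unit -kermx_eq0.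
apply/negPn/negP => /eqP hK.
suff [i hi] : exists i, row i (kermx D) != 0.
  set r := row i (kermx D) in hi.
  have hr : r *m D = 0 by rewrite /r -row_mul mulmx_ker row0.
  have := hp r^T; rewrite trmx_eq0 => /(_ hi).
  by rewrite trmxK -mulmxA -{1}hs -trmx_mul hr trmx0 mulmx0 mxE ltxx.
case: (pselect (exists i, row i (kermx D) != 0)) => [//|hn]; exfalso; apply: hK.
apply/matrixP => i j.
have /matrixP /(_ 0 j) : row i (kermx D) = 0.
  by apply/eqP; apply/negPn/negP => hi; apply: hn; exists i.
by rewrite !mxE.
Qed.

End QF.

Section Ric.
Variables (R : realType) (n m : nat) (A : 'M[R]_n) (B : 'M[R]_(n, m))
  (Q : 'M[R]_n) (Rw : 'M[R]_m).

Definition Dm (X : 'M[R]_n) := Rw + B^T *m X *m B.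
Definition Ric (X : 'M[R]_n) :=
  A^T *m X *m A - A^T *m X *m B *m invmx (Rw + B^T *m X *m B) *m B^T *m X *m A + Q.
Definition KX (X : 'M[R]_n) := - (invmx (Dm X) *m B^T *m X *m A).
Definition Mk (K : 'M[R]_(m, n)) (X : 'M[R]_n) :=
  (A + B *m K)^T *m X *m (A + B *m K) + Q + K^T *m Rw *m K.

Lemma dare_Ric X : dare A B Q Rw X <-> X = Ric X.
Proof. by []. Qed.

Lemma qf_Mk K X v :
  qf (Mk K X) v = qf X ((A + B *m K) *m v) + qf Q v + qf Rw (K *m v).
Proof. by rewrite /Mk !qfD !qf_conj. Qed.

Lemma qf_Ric_K X K v : X^T = X -> Rw^T = Rw -> Dm X \in unitmx ->
  qf (Mk K X) v = qf (Ric X) v + qf (Dm X) ((K - KX X) *m v).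
Proof.
move=> hX hR hD.
have hDs : (Dm X)^T = Dm X.
  by rewrite /Dm linearD /= hR !trmx_mul trmxK hX mulmxA.
set a := A *m v; set w := K *m v; set f := B^T *m (X *m a).
set g := invmx (Dm X) *m f.
have hKv : (K - KX X) *m v = w + g.
  by rewrite mulmxBl /KX mulNmx opprK /g /f /a !mulmxA.
have hDg : Dm X *m g = f by rewrite /g mulmxA mulmxV // mul1mx.
rewrite qf_Mk hKv /Ric -/(Dm X) qfD qfB !qfE.
have -> : (A + B *m K) *m v = a + B *m w by rewrite mulmxDl mulmxA.
rewrite mulmxDr !dotDl !dotDr.
have e1 : dot (B *m w) (X *m a) = dot w f by rewrite dot_mull /f.
have e2 : dot a (X *m (B *m w)) = dot w f by rewrite dotC dot_mull -/(dot _ _) hX e1.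
have e3 : dot (B *m w) (X *m (B *m w)) = dot w ((B^T *m X *m B) *m w).
  by rewrite dot_mull !mulmxA.
have e4 : dot v (A^T *m X *m A *m v) = dot a (X *m a).
  by rewrite -!mulmxA dot_mulr trmxK.
have e5 : dot v (A^T *m X *m B *m invmx (Dm X) *m B^T *m X *m A *m v) = dot f g.
  rewrite -!mulmxA -/a dot_mulr trmxK dot_mulr hX dot_mulr -/a -/f.
  by rewrite /g.
have e6 : dot w (Dm X *m w) = dot w (Rw *m w) + dot w ((B^T *m X *m B) *m w).
  by rewrite /Dm mulmxDl dotDr.
have e7 : dot g (Dm X *m w) = dot w f by rewrite dot_mulr hDs hDg dotC.
have e8 : dot g (Dm X *m g) = dot f g by rewrite hDg dotC.
rewrite mulmxDr !dotDr e7 e8 hDg e6 e1 e2 e3 e4 e5 -/w.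
ring.
Qed.


Lemma pd_ge0 k (M : 'M[R]_k) v : pd M -> 0 <= qf M v.
Proof.
move=> [_ hp]; case: (eqVneq v 0) => [->|hv]; first by rewrite qf_v0.
exact/ltW/hp.
Qed.

Lemma Dm_pd X : psd X -> pd Rw -> pd (Dm X).
Proof.
move=> [hX hXp] [hR hRp]; split.
  by rewrite /Dm linearD /= hR !trmx_mul trmxK hX mulmxA.
move=> v hv; change (0 < qf (Dm X) v); rewrite /Dm qfD qf_conj.
by apply: ltr_wpDr; [apply: hXp | apply: hRp].
Qed.

Lemma Dm_unit X : psd X -> pd Rw -> Dm X \in unitmx.
Proof. by move=> hX hR; apply/pd_unit/Dm_pd. Qed.

Lemma Ric_le X K v : psd X -> pd Rw -> qf (Ric X) v <= qf (Mk K X) v.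
Proof.
move=> hX hR; rewrite (qf_Ric_K K v hX.1 hR.1 (Dm_unit hX hR)) lerDl.
exact/pd_ge0/Dm_pd.
Qed.

Lemma Ric_eq X v : psd X -> pd Rw -> qf (Ric X) v = qf (Mk (KX X) X) v.
Proof.
move=> hX hR; rewrite (qf_Ric_K (KX X) v hX.1 hR.1 (Dm_unit hX hR)) subrr mul0mx.
by rewrite qf_v0 addr0.
Qed.

Lemma Ric_sym X : X^T = X -> Q^T = Q -> Rw^T = Rw -> (Ric X)^T = Ric X.
Proof.
move=> hX hQ hR; rewrite /Ric !linearD !linearN /= hQ.
have hD : (Rw + B^T *m X *m B)^T = Rw + B^T *m X *m B.
  by rewrite linearD /= hR !trmx_mul trmxK hX mulmxA.
by rewrite !trmx_mul !trmxK trmx_inv hD hX !mulmxA.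
Qed.

Lemma Ric_psd X : psd X -> psd Q -> pd Rw -> psd (Ric X).
Proof.
move=> hX hQ hR; split; first exact: Ric_sym hX.1 hQ.1 hR.1.
move=> v; change (0 <= qf (Ric X) v); rewrite Ric_eq // qf_Mk.
apply: addr_ge0; [apply: addr_ge0; [exact: hX.2 | exact: hQ.2] | exact: pd_ge0].
Qed.

Lemma Ric_mono X Y : psd X -> psd Y -> pd Rw -> psdle X Y -> psdle (Ric X) (Ric Y).
Proof.
move=> hX hY hR hXY v; apply: (le_trans (Ric_le (KX Y) v hX hR)).
rewrite Ric_eq // !qf_Mk; do 2 apply: lerD => //; exact: hXY.
Qed.

End Ric.

Section Lim.
Variable R : realType.

Lemma cvg_sumR (I : Type) (r : seq I) (P : pred I) (F : I -> nat -> R) (a : I -> R) :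
  (forall i, P i -> F i @ \oo --> a i) ->
  (fun k => \sum_(i <- r | P i) F i k) @ \oo --> \sum_(i <- r | P i) a i.
Proof. by move=> h; apply: cvg_big => //; exact: add_continuous. Qed.

Lemma cvg_prodR (I : Type) (r : seq I) (P : pred I) (F : I -> nat -> R) (a : I -> R) :
  (forall i, P i -> F i @ \oo --> a i) ->
  (fun k => \prod_(i <- r | P i) F i k) @ \oo --> \prod_(i <- r | P i) a i.
Proof. by move=> h; apply: cvg_big => //; exact: mul_continuous. Qed.

Definition mxcvg p q (U : nat -> 'M[R]_(p, q)) (U0 : 'M[R]_(p, q)) :=
  forall i j, (fun k => U k i j) @ \oo --> U0 i j.

Lemma mxcvg_cst p q (U0 : 'M[R]_(p, q)) : mxcvg (fun=> U0) U0.
Proof. by move=> i j; exact: cvg_cst. Qed.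

Lemma mxcvg_add p q (U V : nat -> 'M[R]_(p, q)) U0 V0 :
  mxcvg U U0 -> mxcvg V V0 -> mxcvg (fun k => U k + V k) (U0 + V0).
Proof.
move=> hU hV i j; rewrite mxE; under eq_fun do rewrite mxE.
exact: cvgD.
Qed.

Lemma mxcvg_opp p q (U : nat -> 'M[R]_(p, q)) U0 :
  mxcvg U U0 -> mxcvg (fun k => - U k) (- U0).
Proof.
move=> hU i j; rewrite mxE; under eq_fun do rewrite mxE.
exact: cvgN.
Qed.

Lemma mxcvg_sub p q (U V : nat -> 'M[R]_(p, q)) U0 V0 :
  mxcvg U U0 -> mxcvg V V0 -> mxcvg (fun k => U k - V k) (U0 - V0).
Proof. by move=> hU hV; apply: mxcvg_add => //; apply: mxcvg_opp. Qed.

Lemma mxcvg_tr p q (U : nat -> 'M[R]_(p, q)) U0 :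
  mxcvg U U0 -> mxcvg (fun k => (U k)^T) U0^T.
Proof. by move=> hU i j; rewrite mxE; under eq_fun do rewrite mxE; exact: hU. Qed.

Lemma mxcvg_mul p q r (U : nat -> 'M[R]_(p, q)) (V : nat -> 'M[R]_(q, r)) U0 V0 :
  mxcvg U U0 -> mxcvg V V0 -> mxcvg (fun k => U k *m V k) (U0 *m V0).
Proof.
move=> hU hV i j; rewrite mxE; under eq_fun do rewrite mxE.
apply: cvg_sumR => l _; exact: cvgM.
Qed.

Lemma mxcvg_scale p q (s : nat -> R) (c : R) (U : nat -> 'M[R]_(p, q)) U0 :
  s @ \oo --> c -> mxcvg U U0 -> mxcvg (fun k => s k *: U k) (c *: U0).
Proof.
move=> hs hU i j; rewrite mxE; under eq_fun do rewrite mxE.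
exact: cvgM.
Qed.

Lemma det_cvg p (U : nat -> 'M[R]_p) U0 :
  mxcvg U U0 -> (fun k => \det (U k)) @ \oo --> \det U0.
Proof.
move=> hU; apply: cvg_sumR => s _; apply: cvgMl_tmp.
by apply: cvg_prodR => i _; exact: hU.
Qed.

Lemma adj_cvg p (U : nat -> 'M[R]_p) U0 :
  mxcvg U U0 -> mxcvg (fun k => \adj (U k)) (\adj U0).
Proof.
move=> hU i j; rewrite mxE; under eq_fun do rewrite mxE.
apply: cvgMl_tmp; apply: det_cvg => a b; rewrite !mxE.
by under eq_fun do rewrite !mxE; exact: hU.
Qed.

Lemma inv_cvg p (U : nat -> 'M[R]_p) U0 :
  (forall k, U k \in unitmx) -> U0 \in unitmx ->
  mxcvg U U0 -> mxcvg (fun k => invmx (U k)) (invmx U0).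
Proof.
move=> hk h0 hU; rewrite /invmx h0.
have -> : (fun k => if U k \in unitmx then (\det (U k))^-1 *: \adj (U k) else U k)
  = (fun k => (\det (U k))^-1 *: \adj (U k)).
  by apply: funext => k; rewrite hk.
apply: mxcvg_scale; last exact: adj_cvg.
apply: cvgV; last exact: det_cvg.
by rewrite -unitfE -unitmxE.
Qed.

End Lim.

Section Bound.
Variable R : realType.

Lemma sq_le_dot n (w : 'cV[R]_n) a : w a 0 ^+ 2 <= dot w w.
Proof.
rewrite dot_self (bigD1 a) //= lerDl; apply: sumr_ge0 => i _; exact: sqr_ge0.
Qed.

Lemma qf_bound n (W : 'M[R]_n) w :
  qf W w <= (\sum_a \sum_b `|W a b|) * dot w w.
Proof.
rewrite /qf mxE.
under eq_bigr do rewrite mxE mulr_suml.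
rewrite exchange_big /= mulr_suml; apply: ler_sum => a _.
rewrite mulr_suml; apply: ler_sum => b _.
have ha := sq_le_dot w a; have hb := sq_le_dot w b.
have hxy : `|w a 0| * `|w b 0| <= dot w w.
  rewrite -(real_normK (num_real (w a 0))) in ha; rewrite -(real_normK (num_real (w b 0))) in hb.
  have := normr_ge0 (w a 0); have := normr_ge0 (w b 0).
  move: ha hb; set x := `|w a 0|; set y := `|w b 0|; set D := dot w w => ha hb hx hy.
  nra.
rewrite mxE; apply: (le_trans (ler_norm _)); rewrite !normrM.
have -> : `|w a 0| * `|W a b| * `|w b 0| = `|W a b| * (`|w a 0| * `|w b 0|) by ring.
by rewrite ler_wpM2l.
Qed.

Lemma sum_pow_bound n (M : 'M[R]_n) :
  (forall i j, (fun k => (M ^+ k) i j) @ \oo --> 0) ->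
  forall v, exists c, forall k, \sum_(j < k) dot (M ^+ j *m v) (M ^+ j *m v) <= c.
Proof.
move=> hM v.
pose E j := (M ^+ j)^T *m M ^+ j.
have hE : mxcvg E 0.
  have hM' : mxcvg (fun k => M ^+ k) 0 by move=> i j; rewrite mxE; exact: hM.
  have := mxcvg_mul (mxcvg_tr hM') hM'; rewrite trmx0 mul0mx; exact.
have hcE : (fun j => \sum_a \sum_b `|E j a b|) @ \oo --> 0.
  have e0 : \sum_(a < n) \sum_(b < n) `|(0 : 'M[R]_n) a b| = 0.
    by rewrite big1 // => a _; rewrite big1 // => b _; rewrite mxE normr0.
  rewrite -[X in _ --> X]e0.
  apply: cvg_sumR => a _; apply: cvg_sumR => b _; apply: cvg_norm; exact: hE.
have h2 : (0 : R) < 1 / 2 by lra.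
have [J HJ] := (proj1 (cvg0P _) hcE) (1/2) h2.
have hJ : forall w, dot (M ^+ J *m w) (M ^+ J *m w) <= 1 / 2 * dot w w.
  move=> w.
  have -> : dot (M ^+ J *m w) (M ^+ J *m w) = qf (E J) w.
    by rewrite /E -(mulmx1 (M ^+ J)^T) qf_conj qfE mul1mx.
  apply: (le_trans (qf_bound _ _)); apply: ler_wpM2r; first exact: dot_self_ge0.
  exact: (le_trans (ler_norm _) (ltW (HJ J (leqnn J)))).
pose f w r := dot (M ^+ r *m w) (M ^+ r *m w).
pose L w := \sum_(r < J) f w r.
have hL : forall w, dot w w <= 2 * (L w - L (M *m w)).
  move=> w.
  have e1 : L (M *m w) = L w + f w J - f w 0.
    rewrite /L.
    have -> : \sum_(r < J) f (M *m w) r = \sum_(r < J) f w r.+1.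
      by apply: eq_bigr => r _; rewrite /f mulmxA -[M ^+ r *m M]/(M ^+ r * M) -exprSr.
    have k1 : \sum_(i < J.+1) f w i = \sum_(i < J) f w i + f w J by rewrite big_ord_recr.
    have k2 : \sum_(i < J.+1) f w i = f w 0 + \sum_(i < J) f w i.+1 by rewrite big_ord_recl.
    rewrite k1 in k2; rewrite k2; ring.
  have e2 : f w 0%N = dot w w by rewrite /f expr0 mul1mx.
  have := hJ w; rewrite e1 -/(f w J) e2; lra.
have L0 : forall w, 0 <= L w.
  by move=> w; apply: sumr_ge0 => r _; exact: dot_self_ge0.
exists (2 * L v) => k.
suff : \sum_(j < k) f v j <= 2 * (L v - L (M ^+ k *m v)).
  have := L0 (M ^+ k *m v); rewrite /f; lra.
elim: k => [|k IH]; first by rewrite big_ord0 expr0 mul1mx subrr mulr0.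
rewrite big_ord_recr /=.
have := hL (M ^+ k *m v); rewrite mulmxA -[M *m M ^+ k]/(M * M ^+ k) -exprS -/(f v k) => h.
lra.
Qed.

End Bound.

Section Seq.
Variables (R : realType) (n m : nat) (A : 'M[R]_n) (B : 'M[R]_(n, m))
  (Q : 'M[R]_n) (Rw : 'M[R]_m).
Hypotheses (hQ : psd Q) (hR : pd Rw).

Definition Xs k := iter k (Ric A B Q Rw) 0.

Lemma psd0 : psd (0 : 'M[R]_n).
Proof. by split; [rewrite trmx0 | move=> v; rewrite mulmx0 mul0mx mxE]. Qed.

Lemma Xs_psd k : psd (Xs k).
Proof. elim: k => [|k IH]; [exact: psd0 | exact: Ric_psd]. Qed.

Lemma XsS k : Xs k.+1 = Ric A B Q Rw (Xs k).
Proof. by []. Qed.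

Lemma Xs_mono k : psdle (Xs k) (Xs k.+1).
Proof.
elim: k => [|k IH].
  move=> v; rewrite qf0; exact: (Ric_psd A B (Xs_psd 0) hQ hR).2.
change (psdle (Ric A B Q Rw (Xs k)) (Ric A B Q Rw (Xs k.+1))).
by apply: Ric_mono => //; exact: Xs_psd.
Qed.

Lemma Xs_mono_le v : {homo (fun k => qf (Xs k) v) : i j / (i <= j)%N >-> i <= j}.
Proof. by apply/nondecreasing_seqP => k; exact: Xs_mono. Qed.

Lemma Xs_bound K : (forall i j, (fun k => ((A + B *m K) ^+ k) i j) @ \oo --> 0) ->
  forall v, exists c, forall k, qf (Xs k) v <= c.
Proof.
move=> hK v.
set M := A + B *m K; set W := Q + K^T *m Rw *m K.
have step : forall k v, qf (Xs k) v <= \sum_(j < k) qf W (M ^+ j *m v).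
  elim=> [|k IH] w; first by rewrite big_ord0 qf0.
  rewrite XsS; apply: (le_trans (Ric_le A B Q K w (Xs_psd k) hR)).
  rewrite qf_Mk -/M big_ord_recl expr0 mul1mx /W qfD qf_conj -addrA addrC.
  rewrite lerD2l; apply: (le_trans (IH _)); apply: ler_sum => j _.
  by rewrite mulmxA -[M ^+ j *m M]/(M ^+ j * M) -exprSr; exact: lexx.
have [c hc] := sum_pow_bound hK v.
set cW := \sum_a \sum_b `|W a b|.
have cW0 : 0 <= cW by apply: sumr_ge0 => a _; apply: sumr_ge0 => b _.
exists (cW * c) => k; apply: (le_trans (step k v)).
apply: (@le_trans _ _ (cW * \sum_(j < k) dot (M ^+ j *m v) (M ^+ j *m v))).
  by rewrite mulr_sumr; apply: ler_sum => j _; exact: qf_bound.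
by apply: ler_wpM2l.
Qed.

End Seq.

Section Polar.
Variable R : realType.
Definition ev n (a : 'I_n) : 'cV[R]_n := delta_mx a 0.

Lemma dot_ev n (X : 'M[R]_n) a b : dot (ev a) (X *m ev b) = X a b.
Proof. by rewrite /dot /ev trmx_delta -rowE -colE !mxE. Qed.

Lemma qf_add_sym n (X : 'M[R]_n) u w : X^T = X ->
  qf X (u + w) = qf X u + qf X w + 2 * dot u (X *m w).
Proof.
move=> hX; rewrite !qfE mulmxDr !dotDl !dotDr.
rewrite [dot w (X *m u)]dot_mulr hX [dot (X *m w) u]dotC; ring.
Qed.

Lemma polar n (X : 'M[R]_n) a b : X^T = X ->
  X a b = (qf X (ev a + ev b) - qf X (ev a) - qf X (ev b)) / 2.
Proof.
move=> hX; rewrite qf_add_sym // dot_ev.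
have -> : qf X (ev a) + qf X (ev b) + 2 * X a b - qf X (ev a) - qf X (ev b) = 2 * X a b.
  by ring.
by rewrite mulrC mulKf // pnatr_eq0.
Qed.

Lemma qf_cvg n (X : nat -> 'M[R]_n) X0 v : mxcvg X X0 ->
  (fun k => qf (X k) v) @ \oo --> qf X0 v.
Proof.
move=> h; have h1 := mxcvg_mul (mxcvg_mul (mxcvg_cst (U0 := v^T)) h) (mxcvg_cst (U0 := v)).
exact: (h1 0 0).
Qed.

Lemma sym_qf_eq n (X Y : 'M[R]_n) : X^T = X -> Y^T = Y ->
  (forall v, qf X v = qf Y v) -> X = Y.
Proof.
move=> hX hY h; apply/matrixP => a b; rewrite (polar a b hX) (polar a b hY).
by rewrite !h.
Qed.

End Polar.

Section Limit.
Variables (R : realType) (n m : nat) (A : 'M[R]_n) (B : 'M[R]_(n, m))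
  (Q : 'M[R]_n) (Rw : 'M[R]_m).
Hypotheses (hQ : psd Q) (hR : pd Rw) (hAB : stabilizable A B).

Local Notation Xs := (Xs A B Q Rw).

Lemma Ric_cvg (X : nat -> 'M[R]_n) X0 : (forall k, psd (X k)) -> psd X0 ->
  mxcvg X X0 -> mxcvg (fun k => Ric A B Q Rw (X k)) (Ric A B Q Rw X0).
Proof.
move=> hk h0 hX; rewrite /Ric.
have cA := mxcvg_cst (U0 := A); have cAt := mxcvg_cst (U0 := A^T).
have cB := mxcvg_cst (U0 := B); have cBt := mxcvg_cst (U0 := B^T).
have cQ := mxcvg_cst (U0 := Q); have cR := mxcvg_cst (U0 := Rw).
have hI : mxcvg (fun k => invmx (Rw + B^T *m X k *m B)) (invmx (Rw + B^T *m X0 *m B)).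
  apply: inv_cvg.
  - by move=> k; exact: (Dm_unit B (hk k) hR).
  - exact: (Dm_unit B h0 hR).
  - by apply: mxcvg_add => //; apply: mxcvg_mul => //; apply: mxcvg_mul.
apply: mxcvg_add => //; apply: mxcvg_sub.
  by apply: mxcvg_mul => //; apply: mxcvg_mul.
do 6 (apply: mxcvg_mul => //).
Qed.


Lemma Xs_limit : exists Xl : 'M[R]_n,
  [/\ mxcvg Xs Xl, psd Xl, (forall k, psdle (Xs k) Xl) & Xl = Ric A B Q Rw Xl].
Proof.
have [K hK] := hAB.
have hK0 := stable_pow0 hK.
pose l v := sup (range (fun k => qf (Xs k) v)).
have hl : forall v, (fun k => qf (Xs k) v) @ \oo --> l v.
  move=> v; apply: nondecreasing_cvgn; first exact: Xs_mono_le.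
  have [c hc] := Xs_bound hQ hR hK0 v.
  by exists c => y [k _ <-]; exact: hc.
pose Xl := \matrix_(a, b) ((l (ev R a + ev R b) - l (ev R a) - l (ev R b)) / 2).
have hX : mxcvg Xs Xl.
  move=> a b; rewrite mxE.
  under eq_fun do rewrite (polar a b (Xs_psd A B hQ hR _).1).
  by apply: cvgMr_tmp; apply: cvgB; [apply: cvgB|]; exact: hl.
have hle : forall k, psdle (Xs k) Xl.
  move=> k v; have hc : (fun=> qf (Xs k) v) @ \oo --> qf (Xs k) v by exact: cvg_cst.
  apply: (ler_cvg_to hc (qf_cvg (v := v) hX)).
  by exists k => // j /= hj; exact: Xs_mono_le.
have hpsd : psd Xl.
  split; first by apply/matrixP => a b; rewrite !mxE [ev R b + ev R a]addrC addrAC.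
  move=> v; apply: (le_trans _ (hle 0%N v)); exact: (Xs_psd A B hQ hR 0).2.
exists Xl; split => //.
apply/matrixP => a b.
have h1 : (fun k => Xs k.+1 a b) @ \oo --> Xl a b.
  by have := hX a b; rewrite -cvg_shiftS.
have h2 : (fun k => Xs k.+1 a b) @ \oo --> Ric A B Q Rw Xl a b.
  exact: (Ric_cvg (fun k => Xs_psd A B hQ hR k) hpsd hX).
by rewrite -(norm_cvg_lim h1) -(norm_cvg_lim h2).
Qed.

End Limit.

Section Uniq.
Variable R : realType.

Lemma dotZl n (s : R) (u v : 'cV[R]_n) : dot (s *: u) v = s * dot u v.
Proof. by rewrite /dot linearZ /= -scalemxAl mxE. Qed.
Lemma dotZr n (s : R) (u v : 'cV[R]_n) : dot u (s *: v) = s * dot u v.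
Proof. by rewrite /dot -scalemxAr mxE. Qed.

Lemma qfZD n (Y : 'M[R]_n) s t u w : Y^T = Y ->
  qf Y (s *: u + t *: w) = s ^+ 2 * qf Y u + t ^+ 2 * qf Y w + 2 * s * t * dot u (Y *m w).
Proof.
move=> hY; rewrite qf_add_sym // !qfE -!scalemxAr !dotZl !dotZr; ring.
Qed.

Lemma qf_cvg0 n (Y : 'M[R]_n) (w : nat -> 'cV[R]_n) : mxcvg w 0 ->
  (fun k => qf Y (w k)) @ \oo --> 0.
Proof.
move=> hw.
have h := mxcvg_mul (mxcvg_mul (mxcvg_tr hw) (mxcvg_cst (U0 := Y))) hw.
by have := h 0 0; rewrite mulmx0 mxE.
Qed.

Variables (n m p : nat) (A : 'M[R]_n) (B : 'M[R]_(n, m))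
  (Q : 'M[R]_n) (Rw : 'M[R]_m) (C : 'M[R]_(p, n)).
Hypotheses (hQ : psd Q) (hR : pd Rw) (hQC : Q = C^T *m C) (hAC : detectable A C).

Lemma qf_fix Y z : psd Y -> Y = Ric A B Q Rw Y ->
  qf Y z = qf Y ((A + B *m KX A B Rw Y) *m z) + qf Q z + qf Rw (KX A B Rw Y *m z).
Proof. by move=> hY hYe; rewrite -qf_Mk -Ric_eq // -hYe. Qed.

Lemma sol_stable Y : psd Y -> Y = Ric A B Q Rw Y -> schur_stable (A + B *m KX A B Rw Y).
Proof.
move=> hY hYe a b x y hxy h1 h2.
rewrite ltNge; apply/negP => hab.
set K := KX A B Rw Y.
have kx := qf_fix x hY hYe; have ky := qf_fix y hY hYe.
rewrite -/K h1 in kx; rewrite -/K h2 in ky.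
have e : a *: x - b *: y = a *: x + (- b) *: y by rewrite scaleNr.
rewrite e qfZD in kx; last exact: hY.1.
rewrite qfZD in ky; last exact: hY.1.
have hQx : 0 <= qf Q x := hQ.2 x; have hQy : 0 <= qf Q y := hQ.2 y.
have hRx := pd_ge0 (K *m x) hR; have hRy := pd_ge0 (K *m y) hR.
have hYx : 0 <= qf Y x := hY.2 x; have hYy : 0 <= qf Y y := hY.2 y.
move: kx ky hQx hQy hRx hRy hYx hYy.
set qx := qf Y x; set qy := qf Y y; set cxy := dot x (Y *m y).
set Qx := qf Q x; set Qy := qf Q y; set Rx := qf Rw (K *m x); set Ry := qf Rw (K *m y).
move=> kx ky hQx hQy hRx hRy hYx hYy.
have hP : 0 <= (a ^+ 2 + b ^+ 2 - 1) * (qx + qy).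
  by apply: mulr_ge0; [rewrite subr_ge0 | apply: addr_ge0].
have hP' : 0 <= a ^+ 2 * qx + b ^+ 2 * qy + b ^+ 2 * qx + a ^+ 2 * qy - qx - qy.
  by move: hP; congr (_ <= _); ring.
rewrite sqrrN in kx.
have hk : 2 * a * - b * cxy = - (2 * b * a * cxy) by ring.
rewrite hk in kx.
move: kx ky hP'.
set t1 := a ^+ 2 * qx; set t2 := b ^+ 2 * qy; set t3 := b ^+ 2 * qx.
set t4 := a ^+ 2 * qy; set u := 2 * b * a * cxy => kx ky hP'.
have hz : Qx + Rx + Qy + Ry <= 0 by lra.
have Qx0 : Qx = 0 by lra.
have Qy0 : Qy = 0 by lra.
have Rx0 : Rx = 0 by lra.
have Ry0 : Ry = 0 by lra.
have qCC : forall z, qf (C^T *m C) z = dot (C *m z) (C *m z).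
  by move=> z; rewrite qfE -mulmxA dot_mulr trmxK.
have Cx : C *m x = 0 by apply: dot_self_eq0; rewrite -qCC -hQC; exact: Qx0.
have Cy : C *m y = 0 by apply: dot_self_eq0; rewrite -qCC -hQC; exact: Qy0.
have Kx : K *m x = 0.
  apply/eqP; apply/negPn/negP => hne; have : 0 < Rx := hR.2 _ hne.
  by rewrite Rx0 ltxx.
have Ky : K *m y = 0.
  apply/eqP; apply/negPn/negP => hne; have : 0 < Ry := hR.2 _ hne.
  by rewrite Ry0 ltxx.
have [L hL] := hAC.
have e1 : (A + L *m C) *m x = a *: x - b *: y.
  by rewrite -h1 !mulmxDl -!mulmxA Cx Kx !mulmx0.
have e2 : (A + L *m C) *m y = b *: x + a *: y.
  by rewrite -h2 !mulmxDl -!mulmxA Cy Ky !mulmx0.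
have := hL a b x y hxy e1 e2.
by move/(le_lt_trans hab); rewrite ltxx.
Qed.


Lemma Xs_le_sol Y : psd Y -> Y = Ric A B Q Rw Y -> forall k, psdle (Xs A B Q Rw k) Y.
Proof.
move=> hY hYe; elim=> [|k IH] v; first by rewrite /= qf0; exact: hY.2.
rewrite [in qf Y v]hYe.
exact: (Ric_mono A B Q (Xs_psd A B hQ hR k) hY hR IH v).
Qed.

Lemma sol_le_stab X Y : psd X -> X = Ric A B Q Rw X -> psd Y -> Y = Ric A B Q Rw Y ->
  psdle Y X.
Proof.
move=> hX hXe hY hYe.
set M := A + B *m KX A B Rw X.
have hM := stable_pow0 (sol_stable hX hXe).
have hd : forall v, qf Y v - qf X v <= qf Y (M *m v) - qf X (M *m v).
  move=> v.
  have h1 := Ric_le A B Q (KX A B Rw X) v hY hR.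
  rewrite -hYe qf_Mk in h1.
  have h2 := qf_fix v hX hXe.
  rewrite -/M in h1 h2; lra.
have hk : forall k v, qf Y v - qf X v <= qf Y (M ^+ k *m v) - qf X (M ^+ k *m v).
  elim=> [|k IH] v; first by rewrite expr0 mul1mx.
  apply: (le_trans (hd v)); apply: (le_trans (IH _)).
  by rewrite mulmxA -[M ^+ k *m M]/(M ^+ k * M) -exprSr.
move=> v; rewrite -subr_le0.
have hw : mxcvg (fun k => M ^+ k *m v) 0.
  have hM' : mxcvg (fun k => M ^+ k) 0 by move=> i j; rewrite mxE; exact: hM.
  by have := mxcvg_mul hM' (mxcvg_cst (U0 := v)); rewrite mul0mx.
have hl : (fun k => qf Y (M ^+ k *m v) - qf X (M ^+ k *m v)) @ \oo --> 0.
  by rewrite -(subrr 0); apply: cvgB; apply: qf_cvg0.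
have hc : (fun=> qf Y v - qf X v) @ \oo --> qf Y v - qf X v by exact: cvg_cst.
apply: (ler_cvg_to hc hl).
by exists 0%N => // k _; exact: hk.
Qed.

End Uniq.

Section Final.
Variable R : realType.

Lemma cancel_unit_both k (S X Y : 'M[R]_k) : S \in unitmx ->
  S *m X *m S = S *m Y *m S -> X = Y.
Proof.
move=> hS h.
have e : forall Z : 'M[R]_k, Z = invmx S *m (S *m Z *m S) *m invmx S.
  by move=> Z; rewrite mulmxA mulKmx // mulmxK.
by rewrite (e X) h -e.
Qed.

Lemma Pstar_eq n m (A : 'M[R]_n) (B : 'M[R]_(n, m)) Q Rw X :
  Pstar A B Q Rw X = Lambda Q Rw + (row_mx A B)^T *m X *m row_mx A B.
Proof.
rewrite /Pstar /Lambda tr_row_mx mul_col_mx mul_col_row add_block_mx.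
by rewrite !add0r.
Qed.

Lemma schurP_Pstar n m (A : 'M[R]_n) (B : 'M[R]_(n, m)) Q Rw X : X^T = X ->
  schurP (Pstar A B Q Rw X) = Ric A B Q Rw X.
Proof.
move=> hX; rewrite /schurP /Pstar block_mxKul block_mxKur block_mxKdr /Ric.
rewrite !trmx_mul !trmxK hX !mulmxA.
by rewrite [Q + _]addrC addrAC.
Qed.

End Final.

Unset Implicit Arguments.

Theorem proposition7 (R : realType) (n m p : nat)
  (A : 'M[R]_n) (B : 'M[R]_(n, m)) (Q : 'M[R]_n) (Rw : 'M[R]_m)
  (C : 'M[R]_(p, n))
  (hQ : psd Q) (hR : pd Rw) (hAB : stabilizable A B)
  (hQC : Q = C^T *m C) (hAC : detectable A C)
  (N : nat) (hN : (0 < N)%N)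
  (x : nat -> 'cV[R]_n) (u : nat -> 'cV[R]_m)
  (hdyn : forall k, (k < N)%N -> x k.+1 = A *m x k + B *m u k)
  (hS : pd (Sdata N x u))
  (P : nat -> 'M[R]_(n + m))
  (hP0 : P 0%N = 0)
  (hPsym : forall k, (P k.+1)^T = P k.+1)
  (hPrec : forall k,
     Sdata N x u *m P k.+1 *m Sdata N x u =
     Sdata N x u *m Lambda Q Rw *m Sdata N x u
     + Hdata N x u *m schur_term P k *m (Hdata N x u)^T) :
  exists X : 'M[R]_n,
    [/\ psd X, dare A B Q Rw X,
        (forall Y : 'M[R]_n, psd Y -> dare A B Q Rw Y -> Y = X) &
        forall i j : 'I_(n + m),
          (fun k : nat => P k i j : R) @ \oo --> (Pstar A B Q Rw X i j : R)].
Proof.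
set S := Sdata N x u.
set G := row_mx A B.
have hH : Hdata N x u = S *m G^T.
  rewrite /Hdata /S /Sdata -scalemxAl mulmx_suml; congr (_ *: _).
  apply: eq_bigr => k _; rewrite hdyn // /zdat.
  by rewrite -[A *m x k + B *m u k](mul_row_col A B) trmx_mul mulmxA.
have hSu : S \in unitmx := pd_unit hS.
have hSs : S^T = S := hS.1.
have hPk : forall k, P k.+1 = Pstar A B Q Rw (schur_term P k).
  move=> k; rewrite Pstar_eq; apply: (cancel_unit_both hSu).
  rewrite hPrec hH trmx_mul trmxK hSs.
  by rewrite mulmxDr mulmxDl !mulmxA.
have hT : forall k, schur_term P k = Xs A B Q Rw k.
  elim=> [|k IH]; first by [].
  rewrite /schur_term /= hPk IH schurP_Pstar //; exact: (Xs_psd A B hQ hR k).1.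
have [Xl [hX hXp hle hXe]] := Xs_limit hQ hR hAB.
exists Xl; split => //.
- move=> Y hY hYd; apply: sym_qf_eq hY.1 hXp.1 _ => v; apply/le_anti/andP; split.
    exact: (sol_le_stab hQ hR hQC hAC hXp hXe hY hYd v).
  have hc : (fun=> qf Y v) @ \oo --> qf Y v by exact: cvg_cst.
  apply: (ler_cvg_to (qf_cvg (v := v) hX) hc).
  by exists 0%N => // k _; exact: (Xs_le_sol hQ hR hY hYd k v).
- move=> i j; rewrite -cvg_shiftS.
  have hc : mxcvg (fun k => Pstar A B Q Rw (Xs A B Q Rw k)) (Pstar A B Q Rw Xl).
    rewrite Pstar_eq.
    under [fun k => _]funext => k do rewrite Pstar_eq.
    apply: mxcvg_add; first exact: mxcvg_cst.
    by apply: mxcvg_mul; [apply: mxcvg_mul; [exact: mxcvg_cst | exact: hX] | exact: mxcvg_cst].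
  have ef : (fun k => P k.+1 i j) = (fun k => Pstar A B Q Rw (Xs A B Q Rw k) i j).
    by apply: funext => k /=; rewrite hPk hT.
  rewrite ef; exact: hc i j.
Qed.
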